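(* Let $I$ be a set, $\lambda\colon I\to I$ a bijection, and $E$ a directed weakly commutative generalized pseudo effect algebra satisfying RDP$_1$ in which $a+b$ is defined for all $a,b\in E$. Then there is a directed po-group $G^\lambda_I$ satisfying RDP$_1$, unique up to isomorphism, such that the kite pseudo effect algebra $K^{\lambda,\lambda}_I(E)$ is isomorphic to $\Gamma(\mathbb Z\overrightarrow{\times} G^\lambda_I,(1,0))$. In particular, $K^{\lambda,\lambda}_I(E)$ is a perfect pseudo effect algebra.
   Context: A generalized pseudo effect algebra (GPEA) is a structure $(E;+,0)$ with partial binary $+$ and constant $0$ such that for all $a,b,c$: (GP1) $a+b$ and $(a+b)+c$ exist iff $b+c$ and $a+(b+c)$ exist, and then they are equal; (GP2) if $a+b$ exists there are $d,e$ with $a+b=d+a=b+e$; (GP3) left and right cancellation; (GP4) $a+b=0$ implies $a=b=0$; (GP5) $a+0=0+a=a$. Order: $a\le b$ iff $a+c=b$ for some $c$; for $a\le b$, $b\ominus_\ell a$ is the unique $d$ with $d+a=b$, $a\ominus_r b$ the unique $e$ with $a+e=b$. $E$ is directed if any two elements have a common upper bound, and weakly commutative if $x+y$ is defined iff $y+x$ is defined. RDP$_1$: whenever $a_1+a_2=b_1+b_2$ there are $c_{11},c_{12},c_{21},c_{22}$ with $a_1=c_{11}+c_{12}$, $a_2=c_{21}+c_{22}$, $b_1=c_{11}+c_{21}$, $b_2=c_{12}+c_{22}$, and such that $0\le x\le c_{12}$, $0\le y\le c_{21}$ imply $x+y=y+x$. A po-group satisfies RDP$_1$ if its positive cone (as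 a GPEA under the group addition) does. A pseudo effect algebra (PEA) is a structure $(E;+,0,1)$ with: associativity as (GP1); for each $a$ unique $d,e$ with $a+d=e+a=1$; (GP2); $1+a$ or $a+1$ defined implies $a=0$. $a^-$, $a^\sim$ denote the unique elements with $a^-+a=1=a+a^\sim$. For a po-group $G$ and $u\in G^+$, $\Gamma(G,u)=\{g\in G\colon 0\le g\le u\}$ with $+$ the group addition restricted to pairs whose sum lies in $[0,u]$, and constants $0,u$, is a PEA. $\mathbb Z\overrightarrow{\times} G$ is the lexicographic product: the group $\mathbb Z\times G$ with coordinatewise operations and $(m,g)\le(n,h)$ iff $m<n$, or $m=n$ and $g\le h$. A PEA $E$ is perfect if there are disjoint $E_0,E_1$ with $E=E_0\cup E_1$ such that (a) $E_i^-=E_i^\sim=E_{1-i}$ for $i=0,1$; (b) if $x\in E_i$, $y\in E_j$ and $x+y$ is defined then $i+j\le1$ and $x+y\in E_{i+j}$; (c) $x+y$ is defined for all $x,y\in E_0$. Kite $K^{\lambda,\lambda}_I(E)$: universe $E^I\uplus\overline E^I$ with $\overline E=\{\bar a\colon a\in E\}$ a disjoint copy of $E$; $0=\langle 0\colon j\in I\rangle$, $1=\langle\bar 0\colon i\in I\rangle$; $\langle\bar a_i\rangle+\langle\bar b_i\rangle$ undefined; $\langle\bar a_i\colon i\in I\rangle+\langle f_j\colon j\in I\rangle=\langle\overline{f_{\lambda^{-1}(i)}\ominus_r a_i}\colon i\in I\rangle$ when $f_{\lambda^{-1}(i)}\le a_i$ for all $i$; $\langle f_j\rangle+\langle\bar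 a_i\rangle=\langle\overline{a_i\ominus_\ell f_{\lambda^{-1}(i)}}\colon i\in I\rangle$ when $f_{\lambda^{-1}(i)}\le a_i$ for all $i$; $\langle f_j\rangle+\langle g_j\rangle=\langle f_j+g_j\rangle$. *)

(* Defs.v *)
(* Partial binary operations are represented as ternary
   relations:  s a b c  means  "a + b is defined and equals c". *)
From Stdlib Require Import ZArith.

Set Implicit Arguments.
Unset Strict Implicit.

Section PartialAlgebra.
Variable E : Type.
Variable s : E -> E -> E -> Prop.

Definition functional_sum : Prop :=
  forall a b c c', s a b c -> s a b c' -> c = c'.

Definition gp_assoc : Prop :=
  (forall a b c,
     (exists d e, s a b d /\ s d c e) <-> (exists d e, s b c d /\ s a d e)) /\
  (forall a b c d e d' e', s a b d -> s d c e -> s b c d' -> s a d' e' -> e = e').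

Definition gp_conj : Prop :=
  forall a b c, s a b c -> exists d e, s d a c /\ s b e c.

Definition gp_cancel : Prop :=
  (forall a b b' c, s a b c -> s a b' c -> b = b') /\
  (forall a a' b c, s a b c -> s a' b c -> a = a').

Definition is_GPEA (z : E) : Prop :=
  functional_sum /\ gp_assoc /\ gp_conj /\ gp_cancel /\
  (forall a b, s a b z -> a = z /\ b = z) /\
  (forall a, s a z a /\ s z a a).

Definition is_PEA (z one : E) : Prop :=
  functional_sum /\ gp_assoc /\
  (forall a, exists d e, s a d one /\ s e a one /\
       forall d' e', s a d' one -> s e' a one -> d' = d /\ e' = e) /\
  gp_conj /\
  (forall a c, s one a c \/ s a one c -> a = z).

Definition gle (a b : E) : Prop := exists c, s a c b.

Definition directed : Prop := forall a b, exists c, gle a c /\ gle b c.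

Definition weakly_commutative : Prop :=
  forall x y, (exists c, s x y c) <-> (exists c, s y x c).

Definition commute (x y : E) : Prop := exists c, s x y c /\ s y x c.

Definition RDP1 : Prop :=
  forall a1 a2 b1 b2 t, s a1 a2 t -> s b1 b2 t ->
  exists c11 c12 c21 c22,
    s c11 c12 a1 /\ s c21 c22 a2 /\ s c11 c21 b1 /\ s c12 c22 b2 /\
    (forall x y, gle x c12 -> gle y c21 -> commute x y).

Definition total_sum : Prop := forall a b, exists c, s a b c.

Definition perfect (one : E) : Prop :=
  exists E0 E1 : E -> Prop,
    (forall x, E0 x \/ E1 x) /\ (forall x, ~ (E0 x /\ E1 x)) /\
    (forall x, E1 x <-> exists a, E0 a /\ s x a one) /\
    (forall x, E1 x <-> exists a, E0 a /\ s a x one) /\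
    (forall x, E0 x <-> exists a, E1 a /\ s x a one) /\
    (forall x, E0 x <-> exists a, E1 a /\ s a x one) /\
    (forall x y z, E0 x -> E0 y -> s x y z -> E0 z) /\
    (forall x y z, E0 x -> E1 y -> s x y z -> E1 z) /\
    (forall x y z, E1 x -> E0 y -> s x y z -> E1 z) /\
    (forall x y z, E1 x -> E1 y -> ~ s x y z) /\
    (forall x y, E0 x -> E0 y -> exists z, s x y z).

End PartialAlgebra.

Definition PEA_iso (E F : Type) (sE : E -> E -> E -> Prop) (zE oneE : E)
  (sF : F -> F -> F -> Prop) (zF oneF : F) : Prop :=
  exists f : E -> F,
    (exists g : F -> E, (forall x, g (f x) = x) /\ (forall y, f (g y) = y)) /\
    f zE = zF /\ f oneE = oneF /\
    (forall a b c, sE a b c <-> sF (f a) (f b) (f c)).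

Unset Implicit Arguments.
Record pogroup := PoGroup {
  pg_car :> Type;
  pg_add : pg_car -> pg_car -> pg_car;
  pg_opp : pg_car -> pg_car;
  pg_zero : pg_car;
  pg_le : pg_car -> pg_car -> Prop;
  pg_addA : forall x y z, pg_add x (pg_add y z) = pg_add (pg_add x y) z;
  pg_add0l : forall x, pg_add pg_zero x = x;
  pg_add0r : forall x, pg_add x pg_zero = x;
  pg_addNl : forall x, pg_add (pg_opp x) x = pg_zero;
  pg_addNr : forall x, pg_add x (pg_opp x) = pg_zero;
  pg_le_refl : forall x, pg_le x x;
  pg_le_trans : forall x y z, pg_le x y -> pg_le y z -> pg_le x z;
  pg_le_anti : forall x y, pg_le x y -> pg_le y x -> x = y;
  pg_le_add : forall a b x y, pg_le x y ->
     pg_le (pg_add a (pg_add x b)) (pg_add a (pg_add y b))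
}.

Definition pg_directed (G : pogroup) : Prop :=
  forall a b : G, exists c : G, pg_le G a c /\ pg_le G b c.

Definition poscone (G : pogroup) := { g : G | pg_le G (pg_zero G) g }.
Definition poscone_sum (G : pogroup) (x y z : poscone G) : Prop :=
  pg_add G (proj1_sig x) (proj1_sig y) = proj1_sig z.

Definition pg_RDP1 (G : pogroup) : Prop := RDP1 (@poscone_sum G).

Definition pogroup_iso (G H : pogroup) : Prop :=
  exists f : G -> H,
    (exists g : H -> G, (forall x, g (f x) = x) /\ (forall y, f (g y) = y)) /\
    (forall x y, f (pg_add G x y) = pg_add H (f x) (f y)) /\
    (forall x y, pg_le G x y <-> pg_le H (f x) (f y)).

Section Gamma.
Variables (T : Type) (add : T -> T -> T) (le : T -> T -> Prop) (z u : T).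
Definition Gamma_car := { g : T | le z g /\ le g u }.
Definition Gamma_sum (x y w : Gamma_car) : Prop :=
  add (proj1_sig x) (proj1_sig y) = proj1_sig w.
End Gamma.

Section Lex.
Variable G : pogroup.
Definition lex_add (p q : Z * G) : Z * G :=
  ((fst p + fst q)%Z, pg_add G (snd p) (snd q)).
Definition lex_le (p q : Z * G) : Prop :=
  (fst p < fst q)%Z \/ (fst p = fst q /\ pg_le G (snd p) (snd q)).

Definition lexGamma := Gamma_car (Z * G) lex_le (0%Z, pg_zero G) (1%Z, pg_zero G).
Definition lexGamma_sum : lexGamma -> lexGamma -> lexGamma -> Prop :=
  Gamma_sum (Z * G) lex_add lex_le (0%Z, pg_zero G) (1%Z, pg_zero G).

Lemma lexGamma_zero_proof :
  lex_le (0%Z, pg_zero G) (0%Z, pg_zero G) /\ lex_le (0%Z, pg_zero G) (1%Z, pg_zero G).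
Proof. split; [right; split; [reflexivity | apply pg_le_refl] | left; reflexivity]. Qed.
Lemma lexGamma_one_proof :
  lex_le (0%Z, pg_zero G) (1%Z, pg_zero G) /\ lex_le (1%Z, pg_zero G) (1%Z, pg_zero G).
Proof. split; [left; reflexivity | right; split; [reflexivity | apply pg_le_refl]]. Qed.

Definition lexGamma_zero : lexGamma := exist _ (0%Z, pg_zero G) lexGamma_zero_proof.
Definition lexGamma_one : lexGamma := exist _ (1%Z, pg_zero G) lexGamma_one_proof.
End Lex.

(* universe E^I (+) bar-E^I : inl f = <f_j>,  inr a = <bar a_i>.
   laminv, rhoinv are the inverses lam^{-1}, rho^{-1}.  Since
   f ⊖_r a is the unique e with f + e = a and a ⊖_l f the unique d with
   d + f = a, the partial sum is: *)
Section Kite.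
Variables (I E : Type) (sE : E -> E -> E -> Prop) (zE : E) (laminv rhoinv : I -> I).

Definition kite_car := ((I -> E) + (I -> E))%type.

Definition kite_sum (x y w : kite_car) : Prop :=
  match x, y, w with
  | inl f, inl g, inl h => forall j, sE (f j) (g j) (h j)
  | inr a, inl f, inr c => forall i, sE (f (laminv i)) (c i) (a i)
  | inl f, inr a, inr c => forall i, sE (c i) (f (rhoinv i)) (a i)
  | _, _, _ => False
  end.

Definition kite_zero : kite_car := inl (fun _ => zE).
Definition kite_one : kite_car := inr (fun _ => zE).
End Kite.

(* Main.v *)
Require Import Defs.
From Stdlib Require Import ZArith Lia ClassicalEpsilon ProofIrrelevance FunctionalExtensionality PropExtensionality.

Lemma sig_ext {A : Type} {P : A -> Prop} (x y : {a | P a}) :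
  proj1_sig x = proj1_sig y -> x = y.
Proof. destruct x as [x px], y as [y py]; simpl; intros ->; f_equal; apply proof_irrelevance. Qed.

Lemma bij_inv {A B : Type} (f : A -> B) :
  (forall x x', f x = f x' -> x = x') -> (forall y, exists x, f x = y) ->
  exists g : B -> A, (forall x, g (f x) = x) /\ (forall y, f (g y) = y).
Proof.
  intros Hi Hs. exists (fun y => proj1_sig (constructive_indefinite_description _ (Hs y))).
  split.
  - intros x. destruct (constructive_indefinite_description _ (Hs (f x))) as [x' Hx']; simpl. auto.
  - intros y. destruct (constructive_indefinite_description _ (Hs y)) as [x' Hx']; simpl. auto.
Qed.

Section Grp.
Variables (T : Type) (ad : T -> T -> T) (op : T -> T) (ze : T).
Hypotheses (gA : forall x y z, ad x (ad y z) = ad (ad x y) z)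
  (g0l : forall x, ad ze x = x) (g0r : forall x, ad x ze = x)
  (gNl : forall x, ad (op x) x = ze) (gNr : forall x, ad x (op x) = ze).
Local Infix "⊕" := ad (at level 50, left associativity).
Local Notation "⊖ x" := (op x) (at level 35, right associativity).

Lemma gKl x y : ⊖x ⊕ (x ⊕ y) = y. Proof. rewrite gA, gNl, g0l; auto. Qed.
Lemma gKr x y : x ⊕ (⊖x ⊕ y) = y. Proof. rewrite gA, gNr, g0l; auto. Qed.
Lemma gKl' x y : (y ⊕ x) ⊕ ⊖x = y. Proof. rewrite <- gA, gNr, g0r; auto. Qed.
Lemma gKr' x y : (y ⊕ ⊖x) ⊕ x = y. Proof. rewrite <- gA, gNl, g0r; auto. Qed.
Lemma gcl x y w : x ⊕ y = x ⊕ w -> y = w.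
Proof. intros H. rewrite <- (gKl x y), H, gKl; auto. Qed.
Lemma gcr x y w : y ⊕ x = w ⊕ x -> y = w.
Proof. intros H. rewrite <- (gKl' x y), H, gKl'; auto. Qed.
Lemma gopp_uniq x y : x ⊕ y = ze -> y = ⊖x.
Proof. intros H. apply (gcl x). rewrite H, gNr; auto. Qed.
Lemma gopp_uniq' x y : y ⊕ x = ze -> y = ⊖x.
Proof. intros H. apply (gcr x). rewrite H, gNl; auto. Qed.
Lemma gopp_opp x : ⊖⊖x = x.
Proof. symmetry. apply gopp_uniq. apply gNl. Qed.
Lemma gopp_add x y : ⊖(x ⊕ y) = ⊖y ⊕ ⊖x.
Proof. symmetry. apply gopp_uniq. rewrite <- gA. rewrite (gA y (op y)), gNr, g0l, gNr. auto. Qed.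
Lemma gopp0 : ⊖ze = ze.
Proof. symmetry; apply gopp_uniq; auto. Qed.
Lemma gconj_id a x y b :
  ⊖(a ⊕ (x ⊕ b)) ⊕ (a ⊕ (y ⊕ b)) = ⊖b ⊕ ((⊖x ⊕ y) ⊕ b).
Proof.
  rewrite !gopp_add. rewrite <- !gA. f_equal. f_equal. rewrite gKl. auto.
Qed.
Lemma gconj_diff p q e :
  ⊖(p ⊕ ⊖q) ⊕ (e ⊕ (p ⊕ ⊖q)) = q ⊕ ((⊖p ⊕ (e ⊕ p)) ⊕ ⊖q).
Proof. rewrite gopp_add, gopp_opp. rewrite <- !gA. auto. Qed.
End Grp.
Section PG.
Variable G : pogroup.
Local Infix "⊕" := (pg_add G) (at level 50, left associativity).
Local Notation "⊖ x" := (pg_opp G x) (at level 35, right associativity).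
Local Notation "'O'" := (pg_zero G).
Local Infix "≤" := (pg_le G) (at level 70).

Ltac ga := intros; first [apply (pg_addA G) | apply (pg_add0l G) | apply (pg_add0r G) | apply (pg_addNl G) | apply (pg_addNr G)].
Lemma pKl x y : ⊖x ⊕ (x ⊕ y) = y. Proof. eapply gKl; ga. Qed.
Lemma pKr x y : x ⊕ (⊖x ⊕ y) = y. Proof. eapply gKr; ga. Qed.
Lemma pKl' x y : (y ⊕ x) ⊕ ⊖x = y. Proof. eapply gKl'; ga. Qed.
Lemma pKr' x y : (y ⊕ ⊖x) ⊕ x = y. Proof. eapply gKr'; ga. Qed.
Lemma pcl x y w : x ⊕ y = x ⊕ w -> y = w. Proof. eapply gcl; ga. Qed.
Lemma pcr x y w : y ⊕ x = w ⊕ x -> y = w. Proof. eapply gcr; ga. Qed.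
Lemma popp_uniq x y : x ⊕ y = O -> y = ⊖x. Proof. eapply gopp_uniq; ga. Qed.
Lemma popp_uniq' x y : y ⊕ x = O -> y = ⊖x. Proof. eapply gopp_uniq'; ga. Qed.
Lemma popp_opp x : ⊖⊖x = x. Proof. eapply gopp_opp; ga. Qed.
Lemma popp_add x y : ⊖(x ⊕ y) = ⊖y ⊕ ⊖x. Proof. eapply gopp_add; ga. Qed.
Lemma popp0 : ⊖O = O. Proof. eapply gopp0; ga. Qed.

Lemma le_add_l a x y : x ≤ y -> a ⊕ x ≤ a ⊕ y.
Proof. intros H. pose proof (pg_le_add G a O x y H). rewrite !pg_add0r in H0. auto. Qed.
Lemma le_add_r b x y : x ≤ y -> x ⊕ b ≤ y ⊕ b.
Proof. intros H. pose proof (pg_le_add G O b x y H). rewrite !pg_add0l in H0. auto. Qed.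
Lemma le_subl x y : x ≤ y <-> O ≤ ⊖x ⊕ y.
Proof. split; intros H.
 - rewrite <- (pg_addNl G x). apply le_add_l; auto.
 - pose proof (le_add_l x _ _ H). rewrite pg_add0r in H0. rewrite (pKr x y) in H0. auto. Qed.
Lemma le_subr x y : x ≤ y <-> O ≤ y ⊕ ⊖x.
Proof. split; intros H.
 - rewrite <- (pg_addNr G x). apply le_add_r; auto.
 - pose proof (le_add_r x _ _ H). rewrite pg_add0l, pKr' in H0. auto. Qed.
Lemma le_opp x y : x ≤ y -> ⊖y ≤ ⊖x.
Proof. intros H. pose proof (pg_le_add G (⊖y) (⊖x) x y H).
  rewrite pg_addNr, pg_add0r, pKl in H0. auto. Qed.
Lemma pos_add x y : O ≤ x -> O ≤ y -> O ≤ x ⊕ y.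
Proof. intros Hx Hy. apply pg_le_trans with y; auto.
  pose proof (le_add_r y _ _ Hx). rewrite pg_add0l in H. auto. Qed.
Lemma pos_conj a x : O ≤ x -> O ≤ a ⊕ (x ⊕ ⊖a).
Proof. intros H. pose proof (pg_le_add G a (⊖a) _ _ H). rewrite pg_add0l, pg_addNr in H0. auto. Qed.
Lemma le_addpos_r x y : O ≤ y -> x ≤ x ⊕ y.
Proof. intros H. pose proof (le_add_l x _ _ H). rewrite pg_add0r in H0. auto. Qed.
Lemma le_addpos_l x y : O ≤ y -> x ≤ y ⊕ x.
Proof. intros H. pose proof (le_add_r x _ _ H). rewrite pg_add0l in H0. auto. Qed.
Lemma neg_opp x : O ≤ x -> ⊖x ≤ O.
Proof. intros H. rewrite <- popp0. apply le_opp; auto. Qed.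
Lemma pos_opp x : x ≤ O -> O ≤ ⊖x.
Proof. intros H. rewrite <- popp0. apply le_opp; auto. Qed.
End PG.
Definition lex_opp (G : pogroup) (p : Z * G) : Z * G := ((- fst p)%Z, pg_opp G (snd p)).

Section LexSec.
Variable G : pogroup.
Lemma lex_addA (x y z : Z * G) : lex_add G x (lex_add G y z) = lex_add G (lex_add G x y) z.
Proof. destruct x, y, z; unfold lex_add; simpl; f_equal; [lia | apply pg_addA]. Qed.
Lemma lex_add0l (x : Z * G) : lex_add G (0%Z, pg_zero G) x = x.
Proof. destruct x; unfold lex_add; simpl; rewrite pg_add0l; auto. Qed.
Lemma lex_add0r (x : Z * G) : lex_add G x (0%Z, pg_zero G) = x.
Proof. destruct x; unfold lex_add; simpl; rewrite pg_add0r; f_equal; lia. Qed.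
Lemma lex_addNl (x : Z * G) : lex_add G (lex_opp G x) x = (0%Z, pg_zero G).
Proof. destruct x; unfold lex_add, lex_opp; simpl; rewrite pg_addNl; f_equal; lia. Qed.
Lemma lex_addNr (x : Z * G) : lex_add G x (lex_opp G x) = (0%Z, pg_zero G).
Proof. destruct x; unfold lex_add, lex_opp; simpl; rewrite pg_addNr; f_equal; lia. Qed.
Lemma lex_le_refl (x : Z * G) : lex_le G x x.
Proof. right; split; auto; apply pg_le_refl. Qed.
Lemma lex_le_trans (x y z : Z * G) : lex_le G x y -> lex_le G y z -> lex_le G x z.
Proof. unfold lex_le; intros [H|[H1 H2]] [K|[K1 K2]]; try (left; lia).
  right; split; [lia | eapply pg_le_trans; eauto]. Qed.
Lemma lex_le_anti (x y : Z * G) : lex_le G x y -> lex_le G y x -> x = y.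
Proof. destruct x, y; unfold lex_le; simpl; intros [H|[H1 H2]] [K|[K1 K2]]; try lia.
  f_equal; auto. apply pg_le_anti; auto. Qed.
Lemma lex_le_add (a b x y : Z * G) : lex_le G x y ->
  lex_le G (lex_add G a (lex_add G x b)) (lex_add G a (lex_add G y b)).
Proof. destruct a, b, x, y; unfold lex_le, lex_add; simpl; intros [H|[H1 H2]].
  - left; lia.
  - right; split; [lia | apply pg_le_add; auto]. Qed.
End LexSec.

Definition LexG (G : pogroup) : pogroup :=
  PoGroup (Z * G) (lex_add G) (lex_opp G) (0%Z, pg_zero G) (lex_le G)
   (lex_addA G) (lex_add0l G) (lex_add0r G) (lex_addNl G) (lex_addNr G)
   (lex_le_refl G) (lex_le_trans G) (lex_le_anti G) (lex_le_add G).

Section Gam.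
Variables (H : pogroup) (u : H).
Hypothesis Hu : pg_le H (pg_zero H) u.
Local Infix "⊕" := (pg_add H) (at level 50, left associativity).
Local Notation "⊖ x" := (pg_opp H x) (at level 35, right associativity).
Local Notation "'O'" := (pg_zero H).
Local Infix "≤" := (pg_le H) (at level 70).
Variables (z0 u0 : Gamma_car H (pg_le H) (pg_zero H) u)
  (Hz0 : proj1_sig z0 = pg_zero H) (Hu0 : proj1_sig u0 = u).

Lemma Gamma_PEA : is_PEA (Gamma_sum H (pg_add H) (pg_le H) (pg_zero H) u) z0 u0.
Proof.
  unfold is_PEA, Gamma_sum. split; [|split; [|split; [|split]]].
  - intros a b c c' H1 H2. apply sig_ext. congruence.
  - split.
    + intros [a [a0 au]] [b [b0 bu]] [c [c0 cu]]; simpl. split.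
      * intros [[d [d0 du]] [[e [e0 eu]] [Hd He]]]; simpl in *.
        assert (Hbc : O ≤ b ⊕ c /\ b ⊕ c ≤ u).
        { split. apply pos_add; auto. apply pg_le_trans with (a ⊕ (b ⊕ c)).
          apply le_addpos_l; auto. rewrite pg_addA, Hd, He; auto. }
        exists (exist (fun g => O ≤ g /\ g ≤ u) _ Hbc), (exist (fun g => O ≤ g /\ g ≤ u) e (conj e0 eu)); simpl. split; auto.
        rewrite pg_addA, Hd, He; auto.
      * intros [[d [d0 du]] [[e [e0 eu]] [Hd He]]]; simpl in *.
        assert (Hab : O ≤ a ⊕ b /\ a ⊕ b ≤ u).
        { split. apply pos_add; auto. apply pg_le_trans with (a ⊕ b ⊕ c).
          apply le_addpos_r; auto. rewrite <- pg_addA, Hd, He; auto. }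
        exists (exist (fun g => O ≤ g /\ g ≤ u) _ Hab), (exist (fun g => O ≤ g /\ g ≤ u) e (conj e0 eu)); simpl. split; auto.
        rewrite <- pg_addA, Hd, He; auto.
    + intros a b c d e d' e' H1 H2 H3 H4. apply sig_ext. rewrite <- H2, <- H4, <- H1, <- H3.
      rewrite pg_addA; auto.
  - intros [a [a0 au]].
    assert (Hd : O ≤ ⊖a ⊕ u /\ ⊖a ⊕ u ≤ u).
    { split. apply -> le_subl; auto. apply pg_le_trans with (O ⊕ u).
      apply le_add_r, neg_opp; auto. rewrite pg_add0l; apply pg_le_refl. }
    assert (He : O ≤ u ⊕ ⊖a /\ u ⊕ ⊖a ≤ u).
    { split. apply -> le_subr; auto. apply pg_le_trans with (u ⊕ O).
      apply le_add_l, neg_opp; auto. rewrite pg_add0r; apply pg_le_refl. }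
    exists (exist (fun g => O ≤ g /\ g ≤ u) _ Hd), (exist (fun g => O ≤ g /\ g ≤ u) _ He); simpl. rewrite Hu0. split; [|split].
    + apply pKr.
    + apply pKr'.
    + intros d' e' H1 H2. split; apply sig_ext; simpl.
      * apply (pcl _ a). rewrite H1, pKr; auto.
      * apply (pcr _ a). rewrite H2, pKr'; auto.
  - intros [a [a0 au]] [b [b0 bu]] [c [c0 cu]]; simpl. intros Hab.
    assert (Hd : O ≤ c ⊕ ⊖a /\ c ⊕ ⊖a ≤ u).
    { split. rewrite <- Hab, <- pg_addA. apply pos_conj; auto.
      apply pg_le_trans with c; auto. apply pg_le_trans with (c ⊕ ⊖ a ⊕ a).
      apply le_addpos_r; auto. rewrite pKr'; apply pg_le_refl. }
    assert (He : O ≤ ⊖b ⊕ c /\ ⊖b ⊕ c ≤ u).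
    { split. rewrite <- Hab. pose proof (pos_conj H (⊖b) a a0). rewrite popp_opp in H0.
      auto.
      apply pg_le_trans with c; auto. apply pg_le_trans with (b ⊕ (⊖ b ⊕ c)).
      apply le_addpos_l; auto. rewrite pKr; apply pg_le_refl. }
    exists (exist (fun g => O ≤ g /\ g ≤ u) _ Hd), (exist (fun g => O ≤ g /\ g ≤ u) _ He); simpl. split; [apply pKr' | apply pKr].
  - intros [a [a0 au]] [c [c0 cu]]. rewrite Hu0 in *. simpl.
    assert (K : u ⊕ a = c \/ a ⊕ u = c -> a ≤ O).
    { intros [K|K].
      - assert (u ⊕ a ≤ u ⊕ O) by (rewrite K, pg_add0r; auto).
        pose proof (le_add_l H (⊖u) _ _ H0). rewrite !pKl in H1. auto.
      - assert (a ⊕ u ≤ O ⊕ u) by (rewrite K, pg_add0l; auto).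
        pose proof (le_add_r H (⊖u) _ _ H0). rewrite !pKl' in H1. auto. }
    intros HH. apply sig_ext. rewrite Hz0. simpl. apply pg_le_anti; auto.
    all: try (apply K; destruct HH; [left|right]; auto).
Qed.
End Gam.
Lemma lexGamma_PEA (G : pogroup) : is_PEA (lexGamma_sum G) (lexGamma_zero G) (lexGamma_one G).
Proof.
  apply (Gamma_PEA (LexG G) (1%Z, pg_zero G)); auto.
  all: left; simpl; lia.
Qed.

Section LexPerf.
Variable G : pogroup.
Local Infix "⊕" := (pg_add G) (at level 50, left associativity).
Local Notation "⊖ x" := (pg_opp G x) (at level 35, right associativity).
Local Notation "'O'" := (pg_zero G).
Local Infix "≤" := (pg_le G) (at level 70).

Lemma lexmem (n : Z) (g : G) :
  lex_le G (0%Z, O) (n, g) /\ lex_le G (n, g) (1%Z, O) ->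
  (n = 0%Z /\ O ≤ g) \/ (n = 1%Z /\ g ≤ O).
Proof. unfold lex_le; simpl. intros [[H|[H1 H2]] [K|[K1 K2]]]; try lia; auto.
  all: try (left; split; auto; lia); try (right; split; auto; lia). Qed.

Lemma mem0 (g : G) : O ≤ g -> lex_le G (0%Z, O) (0%Z, g) /\ lex_le G (0%Z, g) (1%Z, O).
Proof. intros H; split; [right; auto | left; simpl; lia]. Qed.
Lemma mem1 (g : G) : g ≤ O -> lex_le G (0%Z, O) (1%Z, g) /\ lex_le G (1%Z, g) (1%Z, O).
Proof. intros H; split; [left; simpl; lia | right; auto]. Qed.

Definition mk0 (g : G) (H : O ≤ g) : lexGamma G := exist _ (0%Z, g) (mem0 g H).
Definition mk1 (g : G) (H : g ≤ O) : lexGamma G := exist _ (1%Z, g) (mem1 g H).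

Lemma lexGamma_perfect : perfect (lexGamma_sum G) (lexGamma_one G).
Proof.
  exists (fun x => fst (proj1_sig x) = 0%Z), (fun x => fst (proj1_sig x) = 1%Z).
  unfold lexGamma_sum, Gamma_sum.
  split; [|split; [|split; [|split; [|split; [|split; [|split; [|split; [|split; [|split]]]]]]]]].
  - intros [[n g] Hm]; simpl. destruct (lexmem n g Hm) as [[]|[]]; auto.
  - intros [[n g] Hm]; simpl. lia.
  - intros [[n g] Hm]; simpl. split.
    + intros ->. destruct (lexmem _ g Hm) as [[]|[]]; try lia.
      exists (mk0 (⊖g) (pos_opp _ _ H0)). simpl. split; auto.
      unfold lex_add; simpl. rewrite pg_addNr. auto.
    + intros [[[m h] Hm'] [E0 Hs]]; simpl in *. unfold lex_add in Hs. injection Hs; intros; lia.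
  - intros [[n g] Hm]; simpl. split.
    + intros ->. destruct (lexmem _ g Hm) as [[]|[]]; try lia.
      exists (mk0 (⊖g) (pos_opp _ _ H0)). simpl. split; auto.
      unfold lex_add; simpl. rewrite pg_addNl. auto.
    + intros [[[m h] Hm'] [E0 Hs]]; simpl in *. unfold lex_add in Hs. injection Hs; intros; lia.
  - intros [[n g] Hm]; simpl. split.
    + intros ->. destruct (lexmem _ g Hm) as [[]|[]]; try lia.
      exists (mk1 (⊖g) (neg_opp _ _ H0)). simpl. split; auto.
      unfold lex_add; simpl. rewrite pg_addNr. auto.
    + intros [[[m h] Hm'] [E0 Hs]]; simpl in *. unfold lex_add in Hs. injection Hs; intros; lia.
  - intros [[n g] Hm]; simpl. split.
    + intros ->. destruct (lexmem _ g Hm) as [[]|[]]; try lia.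
      exists (mk1 (⊖g) (neg_opp _ _ H0)). simpl. split; auto.
      unfold lex_add; simpl. rewrite pg_addNl. auto.
    + intros [[[m h] Hm'] [E0 Hs]]; simpl in *. unfold lex_add in Hs. injection Hs; intros; lia.
  - intros [[n g] Hm] [[m h] Hm'] [[k l] Hm'']; simpl. unfold lex_add; simpl.
    intros -> -> Hs. injection Hs; intros; lia.
  - intros [[n g] Hm] [[m h] Hm'] [[k l] Hm'']; simpl. unfold lex_add; simpl.
    intros -> -> Hs. injection Hs; intros; lia.
  - intros [[n g] Hm] [[m h] Hm'] [[k l] Hm'']; simpl. unfold lex_add; simpl.
    intros -> -> Hs. injection Hs; intros; lia.
  - intros [[n g] Hm] [[m h] Hm'] [[k l] Hm'']; simpl. unfold lex_add; simpl.
    intros -> -> Hs. injection Hs; intros. destruct (lexmem _ _ Hm'') as [[]|[]]; lia.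
  - intros [[n g] Hm] [[m h] Hm']; simpl. intros -> ->.
    destruct (lexmem _ _ Hm) as [[_ H1]|[]]; try lia.
    destruct (lexmem _ _ Hm') as [[_ H2]|[]]; try lia.
    exists (mk0 (g ⊕ h) (pos_add _ _ _ H1 H2)). simpl. reflexivity.
Qed.
End LexPerf.
Section Transfer.
Variables (A B : Type) (sA : A -> A -> A -> Prop) (zA oA : A)
  (sB : B -> B -> B -> Prop) (zB oB : B)
  (f : A -> B) (g : B -> A) (Hgf : forall x, g (f x) = x) (Hfg : forall y, f (g y) = y)
  (f0 : f zA = zB) (f1 : f oA = oB)
  (Hs : forall a b c, sA a b c <-> sB (f a) (f b) (f c)).

Lemma Hs' a b c : sB a b c <-> sA (g a) (g b) (g c).
Proof. rewrite Hs, !Hfg. tauto. Qed.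
Lemma finj x y : f x = f y -> x = y.
Proof. intros H. rewrite <- (Hgf x), H, Hgf. auto. Qed.

Lemma tr_PEA : is_PEA sB zB oB -> is_PEA sA zA oA.
Proof.
  intros [Hf [[Ha1 Ha2] [Hc [Hcj Ho]]]].
  split; [|split; [split|split; [|split]]].
  - intros a b c c' H1 H2. apply finj. apply Hs in H1; apply Hs in H2. eapply Hf; eauto.
  - intros a b c. split.
    + intros [d [e [H1 H2]]]. apply Hs in H1; apply Hs in H2.
      destruct (proj1 (Ha1 (f a) (f b) (f c)) (ex_intro _ (f d) (ex_intro _ (f e) (conj H1 H2))))
        as [d' [e' [K1 K2]]].
      exists (g d'), (g e'). rewrite !Hs, !Hfg. tauto.
    + intros [d [e [H1 H2]]]. apply Hs in H1; apply Hs in H2.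
      destruct (proj2 (Ha1 (f a) (f b) (f c)) (ex_intro _ (f d) (ex_intro _ (f e) (conj H1 H2))))
        as [d' [e' [K1 K2]]].
      exists (g d'), (g e'). rewrite !Hs, !Hfg. tauto.
  - intros a b c d e d' e' H1 H2 H3 H4. apply finj.
    apply (Ha2 (f a) (f b) (f c) (f d) (f e) (f d') (f e')); apply Hs; auto.
  - intros a. destruct (Hc (f a)) as [d [e [H1 [H2 H3]]]].
    exists (g d), (g e). rewrite !Hs, !Hfg, f1. split; [|split]; auto.
    intros d' e' K1 K2. rewrite Hs, f1 in K1, K2. destruct (H3 _ _ K1 K2) as [E1 E2].
    rewrite <- E1, <- E2, !Hgf. auto.
  - intros a b c H. apply Hs in H. destruct (Hcj _ _ _ H) as [d [e [K1 K2]]].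
    exists (g d), (g e). rewrite !Hs, !Hfg. tauto.
  - intros a c H. apply finj. rewrite f0. apply (Ho (f a) (f c)).
    rewrite <- f1, <- !Hs. auto.
Qed.

Lemma tr_perfect : perfect sB oB -> perfect sA oA.
Proof.
  intros [E0 [E1 [P1 [P2 [P3 [P4 [P5 [P6 [P7 [P8 [P9 [P10 P11]]]]]]]]]]]].
  exists (fun x => E0 (f x)), (fun x => E1 (f x)).
  split; [|split; [|split; [|split; [|split; [|split; [|split; [|split; [|split; [|split]]]]]]]]].
  - intros x; apply P1.
  - intros x; apply P2.
  - intros x. rewrite P3. split.
    + intros [a [Ha Hsa]]. exists (g a). rewrite Hs, !Hfg, f1. tauto.
    + intros [a [Ha Hsa]]. exists (f a). rewrite Hs, f1 in Hsa. eauto.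
  - intros x. rewrite P4. split.
    + intros [a [Ha Hsa]]. exists (g a). rewrite Hs, !Hfg, f1. tauto.
    + intros [a [Ha Hsa]]. exists (f a). rewrite Hs, f1 in Hsa. eauto.
  - intros x. rewrite P5. split.
    + intros [a [Ha Hsa]]. exists (g a). rewrite Hs, !Hfg, f1. tauto.
    + intros [a [Ha Hsa]]. exists (f a). rewrite Hs, f1 in Hsa. eauto.
  - intros x. rewrite P6. split.
    + intros [a [Ha Hsa]]. exists (g a). rewrite Hs, !Hfg, f1. tauto.
    + intros [a [Ha Hsa]]. exists (f a). rewrite Hs, f1 in Hsa. eauto.
  - intros x y z Hx Hy H. rewrite Hs in H. eauto.
  - intros x y z Hx Hy H. rewrite Hs in H. eauto.
  - intros x y z Hx Hy H. rewrite Hs in H. eauto.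
  - intros x y z Hx Hy H. rewrite Hs in H. apply (P10 (f x) (f y) (f z)); auto.
  - intros x y Hx Hy. destruct (P11 _ _ Hx Hy) as [w Hw]. exists (g w). rewrite Hs, Hfg. auto.
Qed.
End Transfer.

Lemma PEA_iso_sym (A B : Type) (sA : A -> A -> A -> Prop) (zA oA : A)
  (sB : B -> B -> B -> Prop) (zB oB : B) :
  PEA_iso sA zA oA sB zB oB -> PEA_iso sB zB oB sA zA oA.
Proof.
  intros [f [[g [Hgf Hfg]] [f0 [f1 Hs]]]].
  exists g. split; [exists f; auto|]. split; [|split].
  - rewrite <- f0, Hgf; auto.
  - rewrite <- f1, Hgf; auto.
  - intros a b c. rewrite Hs, !Hfg. tauto.
Qed.

Lemma PEA_iso_trans (A B C : Type) (sA : A -> A -> A -> Prop) (zA oA : A)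
  (sB : B -> B -> B -> Prop) (zB oB : B) (sC : C -> C -> C -> Prop) (zC oC : C) :
  PEA_iso sA zA oA sB zB oB -> PEA_iso sB zB oB sC zC oC -> PEA_iso sA zA oA sC zC oC.
Proof.
  intros [f [[g [Hgf Hfg]] [f0 [f1 Hs]]]] [f' [[g' [Hgf' Hfg']] [f0' [f1' Hs']]]].
  exists (fun x => f' (f x)). split; [|split; [|split]].
  - exists (fun y => g (g' y)). split; intros; [rewrite Hgf', Hgf | rewrite Hfg, Hfg']; auto.
  - rewrite f0; auto.
  - rewrite f1; auto.
  - intros a b c. rewrite Hs, Hs'. tauto.
Qed.
Lemma psub_shift (G : pogroup) (x y w : G) :
  pg_add G x (pg_opp G y) = pg_add G (pg_add G x w) (pg_opp G (pg_add G y w)).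
Proof. rewrite popp_add, <- pg_addA, pKr. auto. Qed.

Section Uniq.
Variables (G G' : pogroup) (dirG : pg_directed G)
  (h : lexGamma G -> lexGamma G')
  (hs : forall a b c, lexGamma_sum G a b c -> lexGamma_sum G' (h a) (h b) (h c))
  (h0 : h (lexGamma_zero G) = lexGamma_zero G').
Local Infix "⊕" := (pg_add G) (at level 50, left associativity).
Local Notation "⊖ x" := (pg_opp G x) (at level 35, right associativity).
Local Notation "'O'" := (pg_zero G).
Local Infix "≤" := (pg_le G) (at level 70).
Local Infix "⊞" := (pg_add G') (at level 50, left associativity).
Local Notation "⊟ x" := (pg_opp G' x) (at level 35, right associativity).
Local Notation "'O''" := (pg_zero G').
Local Infix "≼" := (pg_le G') (at level 70).

Lemma h_E0 g (H : O ≤ g) : exists g', O' ≼ g' /\ proj1_sig (h (mk0 G g H)) = (0%Z, g').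
Proof.
  assert (Hs : lexGamma_sum G (mk0 G g H) (mk0 G g H) (mk0 G (g ⊕ g) (pos_add G g g H H))).
  { reflexivity. }
  apply hs in Hs. unfold lexGamma_sum, Gamma_sum in Hs.
  destruct (h (mk0 G g H)) as [[n g'] m]. destruct (h (mk0 G (g ⊕ g) (pos_add G g g H H))) as [[k l] m'].
  simpl in *. unfold lex_add in Hs; simpl in Hs. injection Hs; intros.
  destruct (lexmem G' _ _ m) as [[]|[]]; destruct (lexmem G' _ _ m') as [[]|[]]; try lia.
  subst. exists g'; auto.
Qed.

Definition phi (g : G) : G' :=
  match excluded_middle_informative (O ≤ g) with
  | left H => snd (proj1_sig (h (mk0 G g H)))
  | right _ => O'
  end.

Lemma phi_spec g (H : O ≤ g) : proj1_sig (h (mk0 G g H)) = (0%Z, phi g) /\ O' ≼ phi g.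
Proof.
  unfold phi. destruct (excluded_middle_informative (O ≤ g)) as [H'|n]; [|contradiction].
  replace H' with H by apply proof_irrelevance.
  destruct (h_E0 g H) as [g' [p e]]. rewrite e. simpl. auto.
Qed.

Lemma phi_pos g : O ≤ g -> O' ≼ phi g.
Proof. intros H. apply (phi_spec g H). Qed.

Lemma phi_add a b : O ≤ a -> O ≤ b -> phi (a ⊕ b) = phi a ⊞ phi b.
Proof.
  intros Ha Hb.
  assert (Hs : lexGamma_sum G (mk0 G a Ha) (mk0 G b Hb) (mk0 G (a ⊕ b) (pos_add G a b Ha Hb))).
  { reflexivity. }
  apply hs in Hs. unfold lexGamma_sum, Gamma_sum in Hs.
  rewrite (proj1 (phi_spec a Ha)), (proj1 (phi_spec b Hb)), (proj1 (phi_spec _ _)) in Hs.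
  unfold lex_add in Hs. simpl in Hs. injection Hs; auto.
Qed.

Lemma phi0 : phi O = O'.
Proof.
  pose proof (phi_spec O (pg_le_refl G O)) as [E _].
  assert (mk0 G O (pg_le_refl G O) = lexGamma_zero G) by (apply sig_ext; reflexivity).
  rewrite H, h0 in E. simpl in E. injection E; auto.
Qed.

Lemma phi_wd p q p' q' : O ≤ p -> O ≤ q -> O ≤ p' -> O ≤ q' ->
  p ⊕ ⊖q = p' ⊕ ⊖q' -> phi p ⊞ ⊟phi q = phi p' ⊞ ⊟phi q'.
Proof.
  intros Hp Hq Hp' Hq' E.
  set (v := ⊖q' ⊕ (q ⊕ q')).
  assert (Hv : O ≤ v).
  { unfold v. pose proof (pos_conj G (⊖q') q Hq). rewrite popp_opp in H. auto. }
  assert (E1 : p ⊕ q' = p' ⊕ v).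
  { unfold v. rewrite pg_addA, <- E, <- pg_addA, pKl. auto. }
  assert (E2 : q ⊕ q' = q' ⊕ v).
  { unfold v. rewrite pKr. auto. }
  rewrite (psub_shift G' (phi p) (phi q) (phi q')), (psub_shift G' (phi p') (phi q') (phi v)).
  rewrite <- !phi_add; auto. rewrite E1, E2. auto.
Qed.

Lemma ubex x : exists c, O ≤ c /\ x ≤ c.
Proof. destruct (dirG x O) as [c [H1 H2]]. exists c; auto. Qed.
Definition ub x := proj1_sig (constructive_indefinite_description _ (ubex x)).
Lemma ub_spec x : O ≤ ub x /\ x ≤ ub x.
Proof. unfold ub. destruct (constructive_indefinite_description _ (ubex x)); auto. Qed.

Definition F x := phi (ub x) ⊞ ⊟phi (⊖x ⊕ ub x).

Lemma F_rep0 x : O ≤ ub x /\ O ≤ ⊖x ⊕ ub x /\ x = ub x ⊕ ⊖(⊖x ⊕ ub x).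
Proof. destruct (ub_spec x) as [H1 H2]. split; [|split]; auto.
  apply -> le_subl; auto. rewrite popp_add, popp_opp, pKr. auto. Qed.

Lemma F_rep x p q : O ≤ p -> O ≤ q -> x = p ⊕ ⊖q -> F x = phi p ⊞ ⊟phi q.
Proof. intros Hp Hq E. destruct (F_rep0 x) as [K1 [K2 K3]]. unfold F.
  apply phi_wd; auto. rewrite <- K3; auto. Qed.

Lemma F_pos x : O ≤ x -> F x = phi x.
Proof. intros H. rewrite (F_rep x x O); auto. rewrite phi0, popp0, pg_add0r; auto.
  apply pg_le_refl. rewrite popp0, pg_add0r; auto. Qed.

Lemma F_add x y : F (x ⊕ y) = F x ⊞ F y.
Proof.
  destruct (F_rep0 x) as [Hp [Hq Ex]]. destruct (F_rep0 y) as [Hr [Hs Ey]].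
  set (p := ub x) in *. set (q := ⊖x ⊕ p) in *. set (r := ub y) in *. set (s := ⊖y ⊕ r) in *.
  clearbody p q r s.
  assert (Hrq : O ≤ ⊖q ⊕ (r ⊕ q)).
  { pose proof (pos_conj G (⊖q) r Hr). rewrite popp_opp in H. auto. }
  rewrite (F_rep x p q), (F_rep y r s); auto.
  rewrite (F_rep (x ⊕ y) (p ⊕ (⊖q ⊕ (r ⊕ q))) (s ⊕ q)).
  - assert (EQ : phi q ⊞ phi (⊖q ⊕ (r ⊕ q)) = phi r ⊞ phi q).
    { rewrite <- !phi_add; auto. rewrite pKr. auto. }
    assert (EQ' : phi (⊖q ⊕ (r ⊕ q)) = ⊟phi q ⊞ (phi r ⊞ phi q)).
    { rewrite <- EQ, pKl. auto. }
    rewrite phi_add, EQ', phi_add, popp_add; auto.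
    rewrite <- !pg_addA. f_equal. f_equal. f_equal. rewrite pKr. auto.
  - apply pos_add; auto.
  - apply pos_add; auto.
  - rewrite Ex, Ey, popp_add, <- !pg_addA. f_equal. f_equal. rewrite pKr. auto.
Qed.

Lemma F_zero : F O = O'.
Proof. rewrite F_pos, phi0; auto. apply pg_le_refl. Qed.

Lemma F_opp x : F (⊖x) = ⊟F x.
Proof. apply popp_uniq'. rewrite <- F_add, pg_addNl. apply F_zero. Qed.
End Uniq.
Lemma lex_uniq (G G' : pogroup) : pg_directed G -> pg_directed G' ->
  PEA_iso (lexGamma_sum G) (lexGamma_zero G) (lexGamma_one G)
          (lexGamma_sum G') (lexGamma_zero G') (lexGamma_one G') -> pogroup_iso G G'.
Proof.
  intros dG dG' [h [[h' [H1 H2]] [h0 [h1 hs]]]].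
  assert (hsf : forall a b c, lexGamma_sum G a b c -> lexGamma_sum G' (h a) (h b) (h c)).
  { intros a b c H. apply hs. auto. }
  assert (hs' : forall a b c, lexGamma_sum G' a b c -> lexGamma_sum G (h' a) (h' b) (h' c)).
  { intros a b c H. apply hs. rewrite !H2. auto. }
  assert (h0' : h' (lexGamma_zero G') = lexGamma_zero G). { rewrite <- h0, H1. auto. }
  assert (PP : forall a, pg_le G (pg_zero G) a -> phi G' G h' (phi G G' h a) = a).
  { intros a Ha. destruct (phi_spec G G' h hsf a Ha) as [E P].
    assert (h (mk0 G a Ha) = mk0 G' _ P) by (apply sig_ext; rewrite E; reflexivity).
    destruct (phi_spec G' G h' hs' _ P) as [E' _].
    rewrite <- H, H1 in E'. simpl in E'. injection E'; auto. }
  assert (PP' : forall a, pg_le G' (pg_zero G') a -> phi G G' h (phi G' G h' a) = a).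
  { intros a Ha. destruct (phi_spec G' G h' hs' a Ha) as [E P].
    assert (h' (mk0 G' a Ha) = mk0 G _ P) by (apply sig_ext; rewrite E; reflexivity).
    destruct (phi_spec G G' h hsf _ P) as [E' _].
    rewrite <- H, H2 in E'. simpl in E'. injection E'; auto. }
  assert (FF : forall x, F G' G dG' h' (F G G' dG h x) = x).
  { intros x. destruct (F_rep0 G dG x) as [K1 [K2 K3]].
    unfold F at 2. rewrite (F_rep G' G dG' h' hs' _ (phi G G' h (ub G dG x))
      (phi G G' h (pg_add G (pg_opp G x) (ub G dG x)))); auto.
    rewrite !PP; auto. apply phi_pos; auto. apply phi_pos; auto. }
  assert (FF' : forall x, F G G' dG h (F G' G dG' h' x) = x).
  { intros x. destruct (F_rep0 G' dG' x) as [K1 [K2 K3]].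
    unfold F at 2. rewrite (F_rep G G' dG h hsf _ (phi G' G h' (ub G' dG' x))
      (phi G' G h' (pg_add G' (pg_opp G' x) (ub G' dG' x)))); auto.
    rewrite !PP'; auto. apply phi_pos; auto. apply phi_pos; auto. }
  exists (F G G' dG h). split; [exists (F G' G dG' h'); auto|]. split.
  - intros; apply F_add; auto.
  - intros x y. rewrite (le_subl G x y), (le_subl G' (F G G' dG h x) (F G G' dG h y)). split; intros Hle.
    + rewrite <- F_opp, <- F_add; auto. rewrite F_pos; auto. apply phi_pos; auto.
    + rewrite <- F_opp, <- F_add in Hle; auto.
      rewrite <- (FF (pg_add G (pg_opp G x) y)). rewrite F_pos; auto. apply phi_pos; auto.
Qed.
Section Mon.
Variables (M : Type) (add : M -> M -> M) (z : M).
Local Infix "⊕" := add (at level 50, left associativity).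
Hypotheses (mA : forall a b c, a ⊕ (b ⊕ c) = (a ⊕ b) ⊕ c)
 (m0l : forall a, z ⊕ a = a) (m0r : forall a, a ⊕ z = a)
 (mcl : forall a b c, a ⊕ b = a ⊕ c -> b = c)
 (mcr : forall a b c, b ⊕ a = c ⊕ a -> b = c)
 (mcon : forall a b, a ⊕ b = z -> a = z)
 (mnl : forall a b, exists d, a ⊕ b = d ⊕ a)
 (mnr : forall a b, exists e, a ⊕ b = b ⊕ e).

Definition rel (a b : M) : M -> M -> Prop := fun x y => x ⊕ a = y ⊕ b.
Definition radd (R S : M -> M -> Prop) : M -> M -> Prop :=
  fun x y => exists u w, R (u ⊕ x) w /\ S w (u ⊕ y).
Definition ropp (R : M -> M -> Prop) : M -> M -> Prop := fun x y => R y x.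
Definition isrel (R : M -> M -> Prop) := exists a b, R = rel a b.

Lemma rel_ext a b c d : (forall x y, x ⊕ a = y ⊕ b <-> x ⊕ c = y ⊕ d) -> rel a b = rel c d.
Proof. intros H. unfold rel. extensionality x; extensionality y.
  apply propositional_extensionality. apply H. Qed.

Lemma radd_rel a b c d e : c ⊕ b = b ⊕ e -> radd (rel a b) (rel c d) = rel (a ⊕ e) (d ⊕ b).
Proof.
  intros H. unfold radd, rel. extensionality x; extensionality y.
  apply propositional_extensionality. split.
  - intros [u [w [H1 H2]]]. apply (mcl u). rewrite !mA. rewrite H1.
    rewrite <- (mA w b e), <- H, (mA w c b), H2. auto.
  - intros Hx. destruct (mnl b (x ⊕ a)) as [w Hw]. exists b, w. split.
    + rewrite <- mA; exact Hw.
    + apply (mcr b). rewrite <- (mA w c b), H, (mA w b e), <- Hw.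
      rewrite <- (mA b (x ⊕ a) e), <- (mA x a e), Hx. rewrite !mA. auto.
Qed.

Lemma ropp_rel a b : ropp (rel a b) = rel b a.
Proof. unfold ropp, rel. extensionality x; extensionality y.
  apply propositional_extensionality; split; auto. Qed.

Lemma rel_diag a : rel a a = rel z z.
Proof. apply rel_ext. intros x y. rewrite !m0r. split; intros H; [eapply mcr; eauto | subst; auto]. Qed.

Lemma radd_isrel R S : isrel R -> isrel S -> isrel (radd R S).
Proof. intros [a [b ->]] [c [d ->]]. destruct (mnr c b) as [e He].
  exists (a ⊕ e), (d ⊕ b). apply radd_rel; auto. Qed.
Lemma ropp_isrel R : isrel R -> isrel (ropp R).
Proof. intros [a [b ->]]. exists b, a. apply ropp_rel. Qed.

Definition Gc := {R : M -> M -> Prop | isrel R}.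
Definition Gadd (x y : Gc) : Gc :=
  exist isrel (radd (proj1_sig x) (proj1_sig y)) (radd_isrel _ _ (proj2_sig x) (proj2_sig y)).
Definition Gopp (x : Gc) : Gc := exist isrel (ropp (proj1_sig x)) (ropp_isrel _ (proj2_sig x)).
Lemma isrel_rel a b : isrel (rel a b). Proof. exists a, b; auto. Qed.
Definition Gzero : Gc := exist isrel (rel z z) (isrel_rel z z).
Definition emb (m : M) : Gc := exist isrel (rel m z) (isrel_rel m z).

Ltac dG x a b := destruct x as [?R [a [b ?HR]]]; subst.

Lemma GaddA x y w : Gadd x (Gadd y w) = Gadd (Gadd x y) w.
Proof.
  dG x a b. dG y c d. dG w f h. apply sig_ext; simpl.
  destruct (mnr c b) as [e1 H1]. rewrite (radd_rel a b c d e1 H1).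
  destruct (mnr f (d ⊕ b)) as [e2 H2]. rewrite (radd_rel _ _ _ _ e2 H2).
  destruct (mnr f d) as [e3 H3]. rewrite (radd_rel c d f h e3 H3).
  destruct (mnr (c ⊕ e3) b) as [e4 H4]. rewrite (radd_rel a b _ _ e4 H4).
  assert (E : e1 ⊕ e2 = e4).
  { apply (mcl b). rewrite <- H4, mA, <- H1. rewrite <- !mA. f_equal.
    apply (mcl d). rewrite (mA d b e2), <- H2, (mA d e3 b), <- H3, mA. auto. }
  rewrite <- E, <- mA, <- mA. auto.
Qed.

Lemma Gadd0l x : Gadd Gzero x = x.
Proof. dG x a b. apply sig_ext; simpl.
  rewrite (radd_rel z z a b a); [|rewrite m0l, m0r; auto]. rewrite m0l, m0r; auto. Qed.
Lemma Gadd0r x : Gadd x Gzero = x.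
Proof. dG x a b. apply sig_ext; simpl.
  rewrite (radd_rel a b z z z); [|rewrite m0l, m0r; auto]. rewrite m0l, m0r; auto. Qed.
Lemma GaddNl x : Gadd (Gopp x) x = Gzero.
Proof. dG x a b. apply sig_ext; simpl. rewrite ropp_rel.
  rewrite (radd_rel b a a b a); auto. apply rel_diag. Qed.
Lemma GaddNr x : Gadd x (Gopp x) = Gzero.
Proof. dG x a b. apply sig_ext; simpl. rewrite ropp_rel.
  rewrite (radd_rel a b b a b); auto. apply rel_diag. Qed.

Ltac gg := intros; first [apply GaddA | apply Gadd0l | apply Gadd0r | apply GaddNl | apply GaddNr].

Lemma emb_add a c : Gadd (emb a) (emb c) = emb (a ⊕ c).
Proof. apply sig_ext; simpl. rewrite (radd_rel a z c z c); [|rewrite m0l, m0r; auto].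
  rewrite m0l; auto. Qed.
Lemma emb_inj a c : emb a = emb c -> a = c.
Proof. intros H. apply (f_equal (@proj1_sig _ _)) in H. simpl in H.
  assert (rel a z z a) by (unfold rel; rewrite m0l, m0r; auto).
  rewrite H in H0. unfold rel in H0. rewrite m0l, m0r in H0. auto. Qed.
Lemma emb_zero : emb z = Gzero.
Proof. apply sig_ext; reflexivity. Qed.
Lemma Gdecomp x : exists a b, x = Gadd (emb a) (Gopp (emb b)).
Proof. dG x a b. exists a, b. apply sig_ext; simpl. rewrite ropp_rel.
  rewrite (radd_rel a z z b z); [|reflexivity]. rewrite !m0r. auto. Qed.

Definition Gle (x y : Gc) : Prop := exists m, Gadd (Gopp x) y = emb m.

Lemma Gle_refl x : Gle x x.
Proof. exists z. rewrite GaddNl, emb_zero; auto. Qed.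
Lemma Gle_trans x y w : Gle x y -> Gle y w -> Gle x w.
Proof. intros [m1 H1] [m2 H2]. exists (m1 ⊕ m2). rewrite <- emb_add, <- H1, <- H2.
  rewrite <- GaddA. f_equal. symmetry. eapply gKr; try gg. Qed.
Lemma Gle_anti x y : Gle x y -> Gle y x -> x = y.
Proof. intros [m1 H1] [m2 H2].
  assert (E : emb (m1 ⊕ m2) = emb z).
  { rewrite <- emb_add, <- H1, <- H2, emb_zero. rewrite <- GaddA.
    rewrite (gKr _ Gadd Gopp Gzero); try gg. }
  apply emb_inj, mcon in E. subst m1. rewrite emb_zero in H1.
  apply (gopp_uniq _ Gadd Gopp Gzero) in H1; try gg. rewrite H1.
  symmetry; eapply gopp_opp; try gg. Qed.

Lemma conj_emb1 p m : exists m', Gadd (Gopp (emb p)) (Gadd (emb m) (emb p)) = emb m'.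
Proof. destruct (mnr m p) as [m1 H]. exists m1. rewrite emb_add, H, <- emb_add.
  eapply gKl; try gg. Qed.
Lemma conj_emb2 q m : exists m', Gadd (emb q) (Gadd (emb m) (Gopp (emb q))) = emb m'.
Proof. destruct (mnl q m) as [m2 H]. exists m2. rewrite GaddA, emb_add, H, <- emb_add.
  eapply gKl'; try gg. Qed.
Lemma conj_emb b m : exists m', Gadd (Gopp b) (Gadd (emb m) b) = emb m'.
Proof. destruct (Gdecomp b) as [p [q ->]].
  rewrite (gconj_diff _ Gadd Gopp Gzero); try gg.
  destruct (conj_emb1 p m) as [m1 ->]. apply conj_emb2. Qed.

Lemma Gle_add a b x y : Gle x y -> Gle (Gadd a (Gadd x b)) (Gadd a (Gadd y b)).
Proof. intros [m H]. unfold Gle. rewrite (gconj_id _ Gadd Gopp Gzero); try gg. rewrite H. apply conj_emb. Qed.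

Definition Gpo : pogroup :=
  PoGroup Gc Gadd Gopp Gzero Gle GaddA Gadd0l Gadd0r GaddNl GaddNr
    Gle_refl Gle_trans Gle_anti Gle_add.

Lemma Gopp0 : Gopp Gzero = Gzero.
Proof. eapply gopp0; try gg. Qed.
Lemma emb_pos m : pg_le Gpo (pg_zero Gpo) (emb m).
Proof. exists m. simpl. rewrite Gopp0, Gadd0l. auto. Qed.
Lemma cone_emb g : pg_le Gpo (pg_zero Gpo) g -> exists m, g = emb m.
Proof. intros [m H]. simpl in H. rewrite Gopp0, Gadd0l in H. eauto. Qed.
Lemma le_emb_dec a b : pg_le Gpo (Gadd (emb a) (Gopp (emb b))) (emb a).
Proof. exists b. rewrite (gopp_add _ Gadd Gopp Gzero); try gg.
  rewrite (gopp_opp _ Gadd Gopp Gzero); try gg. eapply gKr'; try gg. Qed.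
Lemma emb_le_add a c : pg_le Gpo (emb a) (emb (a ⊕ c)).
Proof. exists c. rewrite <- emb_add. eapply gKl; try gg. Qed.

Lemma Gpo_directed : pg_directed Gpo.
Proof.
  intros x y. destruct (Gdecomp x) as [a [b ->]]. destruct (Gdecomp y) as [c [d ->]].
  exists (emb (a ⊕ c)). split.
  - eapply pg_le_trans; [apply le_emb_dec | apply emb_le_add].
  - destruct (mnr a c) as [e He]. rewrite He.
    eapply pg_le_trans; [apply le_emb_dec | apply emb_le_add].
Qed.

Hypothesis mrdp : forall a1 a2 b1 b2, a1 ⊕ a2 = b1 ⊕ b2 ->
  exists c11 c12 c21 c22, c11 ⊕ c12 = a1 /\ c21 ⊕ c22 = a2 /\ c11 ⊕ c21 = b1 /\ c12 ⊕ c22 = b2 /\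
   (forall x y, (exists c, x ⊕ c = c12) -> (exists c, y ⊕ c = c21) -> x ⊕ y = y ⊕ x).

Definition cemb (m : M) : poscone Gpo := exist _ (emb m) (emb_pos m).

Lemma cone_dest (x : poscone Gpo) : exists m, x = cemb m.
Proof. destruct x as [g Hg]. destruct (cone_emb g Hg) as [m ->]. exists m. apply sig_ext; auto. Qed.

Lemma csum a b c : poscone_sum Gpo (cemb a) (cemb b) (cemb c) <-> a ⊕ b = c.
Proof. unfold poscone_sum; simpl. rewrite emb_add. split; intros H.
  - apply emb_inj; auto.
  - subst; auto. Qed.

Lemma Gpo_RDP1 : pg_RDP1 Gpo.
Proof.
  intros a1 a2 b1 b2 t Ha Hb.
  destruct (cone_dest a1) as [A1 ->]. destruct (cone_dest a2) as [A2 ->].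
  destruct (cone_dest b1) as [B1 ->]. destruct (cone_dest b2) as [B2 ->].
  destruct (cone_dest t) as [T ->].
  rewrite csum in Ha, Hb.
  destruct (mrdp A1 A2 B1 B2) as [c11 [c12 [c21 [c22 [H1 [H2 [H3 [H4 H5]]]]]]]]; [congruence|].
  exists (cemb c11), (cemb c12), (cemb c21), (cemb c22).
  rewrite !csum. split; [|split; [|split; [|split]]]; auto.
  intros x y [c Hc] [c' Hc'].
  destruct (cone_dest x) as [X ->]. destruct (cone_dest y) as [Y ->].
  destruct (cone_dest c) as [C ->]. destruct (cone_dest c') as [C' ->].
  rewrite csum in Hc, Hc'.
  exists (cemb (X ⊕ Y)). rewrite !csum. split; auto. symmetry; apply H5; eauto.
Qed.
End Mon.

Lemma gl1 (H : pogroup) (P A C : H) :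
  pg_add H P (pg_opp H A) = pg_opp H C <-> pg_add H C P = A.
Proof. split; intros E.
  - rewrite <- (pKr' H A P), E, pg_addA, pg_addNr, pg_add0l. auto.
  - rewrite <- E, popp_add, pKr. auto. Qed.
Lemma gl2 (H : pogroup) (P A C : H) :
  pg_add H (pg_opp H A) P = pg_opp H C <-> pg_add H P C = A.
Proof. split; intros E.
  - rewrite <- (pKr H A P), E, <- pg_addA, pg_addNl, pg_add0r. auto.
  - rewrite <- E, popp_add, pKr'. auto. Qed.

Section Main.
Variables (I : Type) (lam laminv : I -> I)
  (Hlam1 : forall i, laminv (lam i) = i) (Hlam2 : forall i, lam (laminv i) = i)
  (E : Type) (sE : E -> E -> E -> Prop) (zE : E)
  (HE : is_GPEA sE zE) (Hrdp : RDP1 sE) (Htot : total_sum sE).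

Definition addE (a b : E) : E := proj1_sig (constructive_indefinite_description _ (Htot a b)).
Lemma addE_spec a b : sE a b (addE a b).
Proof. unfold addE. destruct (constructive_indefinite_description _ (Htot a b)); auto. Qed.
Lemma sE_iff a b c : sE a b c <-> addE a b = c.
Proof. destruct HE as [Hf _]. split; intros H.
  - eapply Hf; [apply addE_spec | auto].
  - subst; apply addE_spec. Qed.

Local Infix "⊕" := addE (at level 50, left associativity).

Lemma eA a b c : a ⊕ (b ⊕ c) = (a ⊕ b) ⊕ c.
Proof. destruct HE as [_ [[_ Ha] _]]. symmetry.
  eapply Ha; apply addE_spec. Qed.
Lemma e0l a : zE ⊕ a = a.
Proof. destruct HE as [_ [_ [_ [_ [_ H]]]]]. apply sE_iff, H. Qed.
Lemma e0r a : a ⊕ zE = a.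
Proof. destruct HE as [_ [_ [_ [_ [_ H]]]]]. apply sE_iff, H. Qed.
Lemma ecl a b c : a ⊕ b = a ⊕ c -> b = c.
Proof. destruct HE as [_ [_ [_ [[Hc _] _]]]]. intros H.
  eapply Hc; [apply addE_spec | rewrite H; apply addE_spec]. Qed.
Lemma ecr a b c : b ⊕ a = c ⊕ a -> b = c.
Proof. destruct HE as [_ [_ [_ [[_ Hc] _]]]]. intros H.
  eapply Hc; [apply addE_spec | rewrite H; apply addE_spec]. Qed.
Lemma econ a b : a ⊕ b = zE -> a = zE.
Proof. destruct HE as [_ [_ [_ [_ [H _]]]]]. intros E1. apply sE_iff in E1.
  apply (H a b E1). Qed.
Lemma enl a b : exists d, a ⊕ b = d ⊕ a.
Proof. destruct HE as [_ [_ [Hc _]]]. destruct (Hc a b _ (addE_spec a b)) as [d [e [H1 H2]]].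
  exists d. apply sE_iff in H1. auto. Qed.
Lemma enr a b : exists e, a ⊕ b = b ⊕ e.
Proof. destruct HE as [_ [_ [Hc _]]]. destruct (Hc a b _ (addE_spec a b)) as [d [e [H1 H2]]].
  exists e. apply sE_iff in H2. auto. Qed.
Lemma erdp a1 a2 b1 b2 : a1 ⊕ a2 = b1 ⊕ b2 ->
  exists c11 c12 c21 c22, c11 ⊕ c12 = a1 /\ c21 ⊕ c22 = a2 /\ c11 ⊕ c21 = b1 /\ c12 ⊕ c22 = b2 /\
   (forall x y, (exists c, x ⊕ c = c12) -> (exists c, y ⊕ c = c21) -> x ⊕ y = y ⊕ x).
Proof. intros H.
  destruct (Hrdp a1 a2 b1 b2 (a1 ⊕ a2) (addE_spec a1 a2)) as [c11 [c12 [c21 [c22 [H1 [H2 [H3 [H4 H5]]]]]]]].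
  { rewrite H; apply addE_spec. }
  exists c11, c12, c21, c22. rewrite !sE_iff in H1, H2, H3, H4.
  split; [|split; [|split; [|split]]]; auto.
  intros x y [c Hc] [c' Hc']. destruct (H5 x y) as [w [W1 W2]].
  - exists c. apply sE_iff; auto.
  - exists c'. apply sE_iff; auto.
  - apply sE_iff in W1; apply sE_iff in W2. congruence.
Qed.

Definition MM := I -> E.
Definition addM (f g : MM) : MM := fun i => f i ⊕ g i.
Definition zM : MM := fun _ => zE.
Local Infix "⊞" := addM (at level 50, left associativity).

Lemma MA a b c : a ⊞ (b ⊞ c) = (a ⊞ b) ⊞ c.
Proof. extensionality i. apply eA. Qed.
Lemma M0l a : zM ⊞ a = a. Proof. extensionality i. apply e0l. Qed.
Lemma M0r a : a ⊞ zM = a. Proof. extensionality i. apply e0r. Qed.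
Lemma Mcl a b c : a ⊞ b = a ⊞ c -> b = c.
Proof. intros H. extensionality i. apply (ecl (a i)). exact (equal_f H i). Qed.
Lemma Mcr a b c : b ⊞ a = c ⊞ a -> b = c.
Proof. intros H. extensionality i. apply (ecr (a i)). exact (equal_f H i). Qed.
Lemma Mcon a b : a ⊞ b = zM -> a = zM.
Proof. intros H. extensionality i. apply (econ (a i) (b i)). exact (equal_f H i). Qed.
Lemma Mnl a b : exists d, a ⊞ b = d ⊞ a.
Proof. exists (fun i => proj1_sig (constructive_indefinite_description _ (enl (a i) (b i)))).
  extensionality i. unfold addM. destruct (constructive_indefinite_description _ _); auto. Qed.
Lemma Mnr a b : exists e, a ⊞ b = b ⊞ e.
Proof. exists (fun i => proj1_sig (constructive_indefinite_description _ (enr (a i) (b i)))).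
  extensionality i. unfold addM. destruct (constructive_indefinite_description _ _); auto. Qed.
Lemma Mrdp a1 a2 b1 b2 : a1 ⊞ a2 = b1 ⊞ b2 ->
  exists c11 c12 c21 c22, c11 ⊞ c12 = a1 /\ c21 ⊞ c22 = a2 /\ c11 ⊞ c21 = b1 /\ c12 ⊞ c22 = b2 /\
   (forall x y, (exists c, x ⊞ c = c12) -> (exists c, y ⊞ c = c21) -> x ⊞ y = y ⊞ x).
Proof.
  intros H.
  assert (Hi : forall i, exists p : E * E * E * E,
    let '(c11, c12, c21, c22) := p in
    c11 ⊕ c12 = a1 i /\ c21 ⊕ c22 = a2 i /\ c11 ⊕ c21 = b1 i /\ c12 ⊕ c22 = b2 i /\
   (forall x y, (exists c, x ⊕ c = c12) -> (exists c, y ⊕ c = c21) -> x ⊕ y = y ⊕ x)).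
  { intros i. destruct (erdp (a1 i) (a2 i) (b1 i) (b2 i) (equal_f H i))
      as [c11 [c12 [c21 [c22 P]]]]. exists (c11, c12, c21, c22). exact P. }
  set (p := fun i => proj1_sig (constructive_indefinite_description _ (Hi i))).
  assert (Pp : forall i, let '(c11, c12, c21, c22) := p i in
    c11 ⊕ c12 = a1 i /\ c21 ⊕ c22 = a2 i /\ c11 ⊕ c21 = b1 i /\ c12 ⊕ c22 = b2 i /\
   (forall x y, (exists c, x ⊕ c = c12) -> (exists c, y ⊕ c = c21) -> x ⊕ y = y ⊕ x)).
  { intros i. unfold p. destruct (constructive_indefinite_description _ (Hi i)); auto. }
  clearbody p.
  exists (fun i => fst (fst (fst (p i)))), (fun i => snd (fst (fst (p i)))),
         (fun i => snd (fst (p i))), (fun i => snd (p i)).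
  unfold addM. split; [|split; [|split; [|split]]]; try (extensionality i; specialize (Pp i);
    destruct (p i) as [[[c11 c12] c21] c22]; simpl; tauto).
  intros x y [c Hc] [c' Hc']. extensionality i. specialize (Pp i).
  apply equal_f with (x := i) in Hc. apply equal_f with (x := i) in Hc'.
  destruct (p i) as [[[c11 c12] c21] c22]; simpl in *.
  destruct Pp as [_ [_ [_ [_ P]]]]. apply P; eauto.
Qed.

Definition GG : pogroup := Gpo MM addM zM MA M0l M0r Mcl Mcr Mcon Mnl Mnr.
Definition embM (m : MM) : GG := emb MM addM zM m.
Lemma embM_pos m : pg_le GG (pg_zero GG) (embM m).
Proof. exact (emb_pos MM addM zM MA M0l M0r Mcl Mcr Mcon Mnl Mnr m). Qed.
Lemma embM_inj a c : embM a = embM c -> a = c.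
Proof. exact (emb_inj MM addM zM M0l M0r a c). Qed.
Lemma embM_add a c : pg_add GG (embM a) (embM c) = embM (a ⊞ c).
Proof. exact (emb_add MM addM zM MA M0l M0r Mcl Mcr Mnl Mnr a c). Qed.
Lemma embM_cone g : pg_le GG (pg_zero GG) g -> exists m, g = embM m.
Proof. exact (cone_emb MM addM zM MA M0l M0r Mcl Mcr Mcon Mnl Mnr g). Qed.
Lemma GG_directed : pg_directed GG.
Proof. exact (Gpo_directed MM addM zM MA M0l M0r Mcl Mcr Mcon Mnl Mnr). Qed.
Lemma GG_RDP1 : pg_RDP1 GG.
Proof. exact (Gpo_RDP1 MM addM zM MA M0l M0r Mcl Mcr Mcon Mnl Mnr Mrdp). Qed.

Definition Mlam (a : MM) : MM := fun j => a (lam j).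

Definition kf (x : kite_car I E) : lexGamma GG :=
  match x with
  | inl f => mk0 GG (embM f) (embM_pos f)
  | inr a => mk1 GG (pg_opp GG (embM (Mlam a))) (neg_opp GG _ (embM_pos (Mlam a)))
  end.

Lemma Mlam_inj a b : Mlam a = Mlam b -> a = b.
Proof. intros H. extensionality i. rewrite <- (Hlam2 i). exact (equal_f H (laminv i)). Qed.

Lemma kf_inj x y : kf x = kf y -> x = y.
Proof.
  intros H. apply (f_equal (@proj1_sig _ _)) in H.
  destruct x as [f|a], y as [g|b]; unfold kf, mk0, mk1 in H; cbn [proj1_sig] in H;
    pose proof (f_equal fst H) as E1; pose proof (f_equal snd H) as E2; cbn [fst snd] in E1, E2; try lia.
  - f_equal. apply embM_inj; auto.
  - f_equal. apply Mlam_inj, embM_inj.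
    rewrite <- (popp_opp GG (embM (Mlam a))), E2, popp_opp. auto.
Qed.

Lemma kf_surj y : exists x, kf x = y.
Proof.
  destruct y as [[n g] Hm]. destruct (lexmem GG n g Hm) as [[-> Hg]|[-> Hg]].
  - destruct (embM_cone g Hg) as [m ->]. exists (inl m). apply sig_ext; reflexivity.
  - destruct (embM_cone _ (pos_opp GG g Hg)) as [m Em].
    exists (inr (fun i => m (laminv i))). apply sig_ext; unfold kf, mk1; cbn [proj1_sig].
    assert (Mlam (fun i => m (laminv i)) = m).
    { extensionality j. unfold Mlam. rewrite Hlam1. auto. }
    rewrite H, <- Em, popp_opp. auto.
Qed.

Lemma reidx (g a c : MM) :
  (forall i, c i ⊕ g (laminv i) = a i) <-> Mlam c ⊞ g = Mlam a.
Proof. split.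
  - intros H. extensionality j. unfold addM, Mlam. rewrite <- H, Hlam1. auto.
  - intros H i. pose proof (equal_f H (laminv i)). unfold addM, Mlam in H0.
    rewrite Hlam2 in H0. auto.
Qed.
Lemma reidx' (g a c : MM) :
  (forall i, g (laminv i) ⊕ c i = a i) <-> g ⊞ Mlam c = Mlam a.
Proof. split.
  - intros H. extensionality j. unfold addM, Mlam. rewrite <- H, Hlam1. auto.
  - intros H i. pose proof (equal_f H (laminv i)). unfold addM, Mlam in H0.
    rewrite Hlam2 in H0. auto.
Qed.

Lemma kf_sum a b c : kite_sum I E sE laminv laminv a b c <->
  lexGamma_sum GG (kf a) (kf b) (kf c).
Proof.
  unfold lexGamma_sum, Gamma_sum.
  destruct a as [f|a], b as [g|b], c as [h|c]; unfold kf, mk0, mk1, lex_add, kite_sum;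
    cbn [proj1_sig fst snd Z.add Pos.add];
    try (split; [tauto | intros HH; injection HH; intros; lia]).
  - split.
    + intros H. rewrite embM_add. f_equal. f_equal. extensionality j. apply sE_iff; auto.
    + intros HH. pose proof (f_equal snd HH) as H0; cbn [snd] in H0. rewrite embM_add in H0. apply embM_inj in H0.
      intros j. apply sE_iff. exact (equal_f H0 j).
  - transitivity (Mlam c ⊞ f = Mlam b).
    + rewrite <- reidx. split; intros H i; apply sE_iff; auto.
    + split.
      * intros H. f_equal. apply gl1. rewrite embM_add, H. auto.
      * intros HH. pose proof (f_equal snd HH) as H0; cbn [snd] in H0. apply (proj1 (gl1 _ _ _ _)) in H0.
        rewrite embM_add in H0. apply embM_inj. auto.
  - transitivity (g ⊞ Mlam c = Mlam a).
    + rewrite <- reidx'. split; intros H i; apply sE_iff; auto.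
    + split.
      * intros H. f_equal. apply gl2. rewrite embM_add, H. auto.
      * intros HH. pose proof (f_equal snd HH) as H0; cbn [snd] in H0. apply (proj1 (gl2 _ _ _ _)) in H0.
        rewrite embM_add in H0. apply embM_inj. auto.
Qed.

Lemma kite_iso : PEA_iso (kite_sum I E sE laminv laminv) (kite_zero I E zE) (kite_one I E zE)
  (lexGamma_sum GG) (lexGamma_zero GG) (lexGamma_one GG).
Proof.
  exists kf. split; [apply bij_inv; [apply kf_inj | apply kf_surj]|].
  split; [|split].
  - apply sig_ext; reflexivity.
  - apply sig_ext; simpl. f_equal.
    exact (Gopp0 MM addM zM MA M0l M0r Mcl Mcr Mnl Mnr).
  - apply kf_sum.
Qed.
End Main.

Theorem theorem3p7 (I : Type) (lam laminv : I -> I)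
  (Hlam1 : forall i, laminv (lam i) = i) (Hlam2 : forall i, lam (laminv i) = i)
  (E : Type) (sE : E -> E -> E -> Prop) (zE : E)
  (HE : is_GPEA sE zE) (Hdir : directed sE) (Hwc : weakly_commutative sE)
  (Hrdp : RDP1 sE) (Htot : total_sum sE) :
  let K := kite_sum I E sE laminv laminv in
  let K0 := kite_zero I E zE in
  let K1 := kite_one I E zE in
  (exists G : pogroup,
     pg_directed G /\ pg_RDP1 G /\
     PEA_iso K K0 K1 (lexGamma_sum G) (lexGamma_zero G) (lexGamma_one G) /\
     (forall G' : pogroup,
        pg_directed G' -> pg_RDP1 G' ->
        PEA_iso K K0 K1 (lexGamma_sum G') (lexGamma_zero G') (lexGamma_one G') ->
        pogroup_iso G G')) /\
  is_PEA K K0 K1 /\ perfect K K1.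
Proof.
  intros K K0 K1.
  pose proof (kite_iso I lam laminv Hlam1 Hlam2 E sE zE HE Htot) as Hiso.
  set (G := GG I E sE zE HE Htot) in *.
  split; [|split].
  - exists G. split; [|split; [|split]].
    + exact (GG_directed I E sE zE HE Htot).
    + exact (GG_RDP1 I E sE zE HE Hrdp Htot).
    + exact Hiso.
    + intros G' dG' _ Hiso'. apply lex_uniq; auto.
      * exact (GG_directed I E sE zE HE Htot).
      * eapply PEA_iso_trans; [apply PEA_iso_sym; exact Hiso | exact Hiso'].
  - destruct Hiso as [f [[g [Hgf Hfg]] [f0 [f1 Hs]]]].
    exact (tr_PEA _ _ K K0 K1 _ _ _ f g Hgf Hfg f0 f1 Hs (lexGamma_PEA G)).
  - destruct Hiso as [f [[g [Hgf Hfg]] [f0 [f1 Hs]]]].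
    exact (tr_perfect _ _ K K1 _ _ f g Hfg f1 Hs (lexGamma_perfect G)).
Qed.
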